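(* Let $(X,A)$ be a relative fat CW complex with fat skeleta $X^{(n)}$. For each $n\ge0$, the canonical map $\hat i_n:X^{(n-1)}\to X^{(n)}$ is an induction.
   Context: An induction is an injective smooth map that is a diffeomorphism onto its image with the subset diffeology. Let $\ell(t)=0$ for $t\le0$, $e^{-1/t}$ for $t>0$; $\alpha_0=\int_0^1\ell(3x)\ell(3-3x)dx$; $\lambda(t)=\frac1{\alpha_0}\int_0^t\ell(3x)\ell(3-3x)dx$; $\phi(t)=\int_0^{1/2+t}\lambda(x)dx$. For integers $n,m\ge0$: $\mathbb{D}^{n,m}=\{(u,v)\in\mathbb{R}^n\times\mathbb{R}^m:\|u\|\ge1-\phi(2-\|u\|-\|v\|)\}$, $\mathbb{S}^{n-1,m}=\{(u,v):\|u\|\ge1\}$ (empty for $n=0$), with subset diffeologies. A relative fat CW complex $(X,A)$ consists of a diffeological space $X$, subspaces $A=X^{(-1)}\subset X^{(0)}\subset\cdots$, index sets $J_n$, maps $m_n:J_n\to\mathbb{N}_0$ and smooth maps $h_n:\coprod_{j\in J_n}\mathbb{S}^{n-1,m_n(j)}\to X^{(n-1)}$ such that $X^{(n)}$ is the pushout in the category of diffeological spaces of the inclusion $i_n:\coprod_j\mathbb{S}^{n-1,m_n(j)}\hookrightarrow\coprod_j\mathbb{D}^{n,m_n(j)}$ and $h_n$, with induced maps $\hat i_n:X^{(n-1)}\to X^{(n)}$ and $\hat h_n:\coprod_j\mathbb{D}^{n,m_n(j)}\to X^{(n)}$, and $X$ is the diffeological colimit of the $X^{(n)}$. *)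

(* Defs.v *)
From HB Require Import structures.
From mathcomp Require Import all_boot all_order all_algebra.
From mathcomp Require Import all_classical all_reals all_analysis.
Set Implicit Arguments. Unset Strict Implicit. Unset Printing Implicit Defensive.
Import Order.TTheory GRing.Theory Num.Theory.
Import numFieldNormedType.Exports.
Local Open Scope classical_set_scope.
Local Open Scope ring_scope.

Section Diffeology.
Variable R : realType.

Definition basis_vec (n : nat) (i : 'I_n) : 'rV[R]_n := delta_mx 0 i.

Definition partials_closed (n k : nat) (U : set 'rV[R]_n)
    (S : set ('rV[R]_n -> 'rV[R]_k)) : Prop :=
  forall g, S g ->
    (forall x, U x -> {for x, continuous g}) /\
    (forall i : 'I_n,
        (forall x, U x -> derivable g x (basis_vec i)) /\
        S (fun y => 'D_(basis_vec i) g y)).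

(* F is C^infinity on U: all iterated partial derivatives of F exist and are
   continuous on U. *)
Definition smooth_on (n k : nat) (U : set 'rV[R]_n) (F : 'rV[R]_n -> 'rV[R]_k) :=
  exists S, partials_closed U S /\ S F.

(* A space with a family of plots; a plot of dimension n is a pair (U, p) with
   U an open subset of R^n and p : U -> X (represented by a total map whose
   values outside U are irrelevant). *)
Record dspace := DSpace {
  dcar :> Type;
  dplot : forall n : nat, set 'rV[R]_n -> ('rV[R]_n -> dcar) -> Prop }.

Definition is_diffeology (X : dspace) : Prop :=
  (forall n U p, @dplot X n U p -> open U) /\
  (forall n U (p q : 'rV[R]_n -> X), dplot U p ->
      (forall x, U x -> p x = q x) -> dplot U q) /\
  (forall n (U : set 'rV[R]_n) (c : X), open U -> dplot U (fun _ => c)) /\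
  (forall n (U : set 'rV[R]_n) (p : 'rV[R]_n -> X), open U ->
      (forall x, U x -> exists V, [/\ open V, V x, V `<=` U & dplot V p]) ->
      dplot U p) /\
  (forall n k (U : set 'rV[R]_n) (p : 'rV[R]_n -> X) (V : set 'rV[R]_k)
          (F : 'rV[R]_k -> 'rV[R]_n),
      dplot U p -> open V -> smooth_on V F -> (forall y, V y -> U (F y)) ->
      dplot V (p \o F)).

Definition dsmooth (X Y : dspace) (f : X -> Y) : Prop :=
  forall n U (p : 'rV[R]_n -> X), dplot U p -> dplot U (f \o p).

Definition ddiffeo (X Y : dspace) (f : X -> Y) : Prop :=
  dsmooth f /\ exists g : Y -> X, [/\ dsmooth g, cancel f g & cancel g f].

Definition euclid (k : nat) : dspace :=
  @DSpace 'rV[R]_k (fun n U p => open U /\ smooth_on U p).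

Definition subspace (X : dspace) (A : set X) : dspace :=
  @DSpace {x : X | A x} (fun n U p => dplot U (sval \o p)).

Definition coprod (J : Type) (T : J -> dspace) : dspace :=
  @DSpace {j : J & T j} (fun n U p =>
    open U /\
    forall x, U x -> exists V j (q : 'rV[R]_n -> T j),
      [/\ open V, V x, V `<=` U, dplot V q &
          forall y, V y -> p y = existT _ j (q y)]).

Definition dimage (X Y : dspace) (f : X -> Y) : set Y := fun y => exists x, f x = y.
Definition corestr (X Y : dspace) (f : X -> Y) : X -> subspace (dimage f) :=
  fun x => exist _ (f x) (ex_intro _ x erefl).
Definition induction_map (X Y : dspace) (f : X -> Y) : Prop :=
  [/\ injective f, dsmooth f & ddiffeo (corestr f)].

Definition is_pushout (A B C P : dspace) (f : A -> B) (g : A -> C)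
    (jB : B -> P) (jC : C -> P) : Prop :=
  [/\ dsmooth jB, dsmooth jC, jB \o f = jC \o g &
      forall Q : dspace, is_diffeology Q ->
      forall (kB : B -> Q) (kC : C -> Q), dsmooth kB -> dsmooth kC ->
        kB \o f = kC \o g ->
        exists u : P -> Q, (dsmooth u /\ u \o jB = kB /\ u \o jC = kC) /\
          forall u' : P -> Q, dsmooth u' -> u' \o jB = kB -> u' \o jC = kC ->
            u' = u].

Definition is_seq_colimit (Xs : nat -> dspace) (s : forall k, Xs k -> Xs k.+1)
    (X : dspace) (c : forall k, Xs k -> X) : Prop :=
  (forall k, dsmooth (c k) /\ c k.+1 \o s k = c k) /\
  forall Q : dspace, is_diffeology Q ->
  forall (d : forall k, Xs k -> Q),
    (forall k, dsmooth (d k) /\ d k.+1 \o s k = d k) ->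
    exists u : X -> Q, (dsmooth u /\ forall k, u \o c k = d k) /\
      forall u' : X -> Q, dsmooth u' -> (forall k, u' \o c k = d k) -> u' = u.

Local Unset Implicit Arguments.
Definition ell (t : R) : R := if t <= 0 then 0 else expR (- t^-1).

Definition integ0 (f : R -> R) (t : R) : R :=
  if 0 <= t then Rintegral (@lebesgue_measure R) `[0, t] f
  else - Rintegral (@lebesgue_measure R) `[t, 0] f.

Definition bump (x : R) : R := ell (3 * x) * ell (3 - 3 * x).
Definition alpha0 : R := integ0 bump 1.
Definition lam (t : R) : R := alpha0^-1 * integ0 bump t.
Definition phi (t : R) : R := integ0 lam (2^-1 + t).

Definition enorm {k : nat} (u : 'rV[R]_k) : R := Num.sqrt (\sum_i u 0 i ^+ 2).

(* R^n x R^m is represented as R^(n+m); u = lsubmx, v = rsubmx *)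
Definition fatD_set (n m : nat) : set 'rV[R]_(n + m) :=
  fun x => enorm (lsubmx x) >= 1 - phi (2 - enorm (lsubmx x) - enorm (rsubmx x)).
Definition fatD (n m : nat) : dspace := subspace (fatD_set n m : set (euclid (n + m))).

(* S^{n-1,m} = {(u,v) : |u| >= 1}, as a subset of D^{n,m} (which contains it) *)
Definition fatS_set (n m : nat) : set (fatD n m) :=
  fun x => enorm (lsubmx (sval x)) >= 1.
Definition fatS (n m : nat) : dspace := subspace (fatS_set n m).

Definition cell_incl (n : nat) (J : Type) (mj : J -> nat) :
    coprod (fun j => fatS n (mj j)) -> coprod (fun j => fatD n (mj j)) :=
  fun z => existT _ (projT1 z) (sval (projT2 z)).

End Diffeology.

(* Main.v *)
Require Import Defs.
From HB Require Import structures.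
From mathcomp Require Import all_boot all_order all_algebra.
From mathcomp Require Import all_classical all_reals all_analysis.
From Stdlib Require Import Eqdep.
From Stdlib Require List.
Set Implicit Arguments. Unset Strict Implicit. Unset Printing Implicit Defensive.
Import Order.TTheory GRing.Theory Num.Theory.
Import numFieldNormedType.Exports.
Local Open Scope classical_set_scope.
Local Open Scope ring_scope.

Section Ana.
Variable R : realType.

Definition pc (n : nat) (W : normedModType R) (U : set 'rV[R]_n)
    (S : set ('rV[R]_n -> W)) : Prop :=
  forall g, S g ->
    (forall x, U x -> {for x, continuous g}) /\
    (forall i : 'I_n,
        (forall x, U x -> derivable g x (basis_vec R i)) /\
        S (fun y => 'D_(basis_vec R i) g y)).
Definition CS (n : nat) (W : normedModType R) (U : set 'rV[R]_n) (f : 'rV[R]_n -> W) :=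
  exists S, pc U S /\ S f.

Lemma smoothE n k (U : set 'rV[R]_n) (f : 'rV[R]_n -> 'rV[R]_k) :
  smooth_on U f <-> CS U f.
Proof. by split; move=> [S [pS Sf]]; exists S. Qed.

Lemma CS_sub n (W : normedModType R) (U V : set 'rV[R]_n) (f : 'rV[R]_n -> W) :
  V `<=` U -> CS U f -> CS V f.
Proof.
move=> VU [S [pS Sf]]; exists S; split => // g /pS [c d]; split.
  by move=> x /VU; exact: c.
by move=> i; have [d1 d2] := d i; split => // x /VU; exact: d1.
Qed.

Lemma CS_cont n (W : normedModType R) (U : set 'rV[R]_n) (f : 'rV[R]_n -> W) x :
  CS U f -> U x -> {for x, continuous f}.
Proof. by move=> [S [pS /pS [c _]]]; exact: c. Qed.

Lemma CS_der n (W : normedModType R) (U : set 'rV[R]_n) (f : 'rV[R]_n -> W) i :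
  CS U f -> (forall x, U x -> derivable f x (basis_vec R i)) /\
    CS U ('D_(basis_vec R i) f).
Proof. by move=> [S [pS Sf]]; have [_ /(_ i) [d1 d2]] := pS _ Sf; split => //; exists S. Qed.

Lemma open_nbhsE n (U : set 'rV[R]_n) x : open U -> U x -> nbhs x U.
Proof. by move=> oU Ux; apply: open_nbhs_nbhs; split. Qed.

Lemma CS_ext n (W : normedModType R) (U : set 'rV[R]_n) (f g : 'rV[R]_n -> W) :
  open U -> (forall x, U x -> f x = g x) -> CS U f -> CS U g.
Proof.
move=> oU fg [S [pS Sf]].
exists (fun h => exists f', S f' /\ forall x, U x -> h x = f' x); split; last first.
  by exists f; split => // x Ux; rewrite fg.
move=> h [f' [Sf' hf']]; have [c d] := pS _ Sf'.
have nb x : U x -> {near x, f' =1 h}.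
  move=> Ux; apply: filterS (open_nbhsE oU Ux) => y Uy; by rewrite hf'.
split.
  move=> x Ux; have cf := c _ Ux. move: cf. rewrite /prop_for /continuous_at -(hf' _ Ux) => cf.
  apply: cvg_trans (near_eq_cvg (nb _ Ux)) cf.
move=> i; have [d1 d2] := d i; split.
  by move=> x Ux; apply: near_eq_derivable (nb _ Ux) (d1 _ Ux).
exists ('D_(basis_vec R i) f'); split => // x Ux.
apply: near_eq_derive; apply: filterS (open_nbhsE oU Ux) => y Uy; by rewrite hf'.
Qed.

Lemma CS_id n (U : set 'rV[R]_n) : CS U id.
Proof.
exists (fun g => g = id \/ exists c, g = cst c); split; last by left.
move=> g [->|[c ->]]; split.
- by move=> x _; exact: cvg_id.
- move=> i; split; first by move=> x _; exact: derivable_id.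
  by right; exists (basis_vec R i); apply: funext => y; rewrite derive_id.
- by move=> x _; exact: cst_continuous.
- move=> i; split; first by move=> x _; exact: derivable_cst.
  by right; exists 0; apply: funext => y; rewrite derive_cst.
Qed.

Lemma open_preim n k (V : set 'rV[R]_k) (W : set 'rV[R]_n) (F : 'rV[R]_k -> 'rV[R]_n) :
  open V -> (forall x, V x -> {for x, continuous F}) -> open W ->
  open (V `&` F @^-1` W).
Proof.
move=> oV cF oW; rewrite openE => x [Vx Wx].
rewrite /interior; apply: filterI; first exact: open_nbhsE.
exact: (cF _ Vx) (open_nbhsE oW Wx).
Qed.
End Ana.

Section Ana2.
Variable R : realType.

Lemma dirder (V W : normedModType R) (f : V -> W) (y v : V) (t : R) :
  derivable f (y + t *: v) v ->
  is_derive t 1 (fun s => f (y + s *: v)) ('D_v f (y + t *: v)).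
Proof.
have E : (fun h : R => h^-1 *: ((fun s => f (y + s *: v)) (h *: 1 + t) - f (y + t *: v)))
  = (fun h => h^-1 *: (f (h *: v + (y + t *: v)) - f (y + t *: v))).
  apply: funext => h /=; congr (_ *: (f _ - _)).
  have -> : h *: (1:R) + t = h + t by rewrite -[h *: 1]/(h * 1) mulr1.
  by rewrite scalerDl addrCA.
move=> d; apply: DeriveDef.
  by rewrite /derivable /= E.
by rewrite /derive /= E.
Qed.

Lemma is_derive_cont (phi : R -> R) (t d : R) : is_derive t (1:R) phi d -> {for t, continuous phi}.
Proof.
move=> H; apply/differentiable_continuous/derivable1_diffP.
by apply: (@ex_derive _ _ _ _ _ _ _ H).
Qed.

Lemma mvt_abs (phi D : R -> R) (b : R) :
  (forall t : R, `|t| <= `|b| -> is_derive t (1:R) phi (D t)) ->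
  exists c, `|c| <= `|b| /\ phi b - phi 0 = D c * b.
Proof.
move=> hd; have [b0|b0] := leP 0 b.
  have [c cI E] : exists2 c, c \in `[0, b]%R & phi b - phi 0 = D c * (b - 0).
    apply: MVT_segment => //.
      move=> x; rewrite in_itv /= => /andP [x0 xb]; apply: hd.
      rewrite (ger0_norm (ltW x0)) (ger0_norm b0); exact: ltW.
    apply: continuous_in_subspaceT => x; rewrite inE /= in_itv /= => /andP [x0 xb].
    apply: (@is_derive_cont _ _ (D x)); apply: hd.
    by rewrite (ger0_norm x0) (ger0_norm b0).
  exists c; split; last by rewrite E subr0.
  move: cI; rewrite in_itv /= => /andP [c0 cb].
  by rewrite (ger0_norm c0) (ger0_norm b0).
have [c cI E] : exists2 c, c \in `[b, 0]%R & phi 0 - phi b = D c * (0 - b).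
  apply: MVT_segment; first exact: ltW.
    move=> x; rewrite in_itv /= => /andP [bx x0]; apply: hd.
    rewrite (ltr0_norm x0) (ltr0_norm b0) lerN2; exact: ltW.
  apply: continuous_in_subspaceT => x; rewrite inE /= in_itv /= => /andP [bx x0].
  apply: (@is_derive_cont _ _ (D x)); apply: hd.
  by rewrite (ler0_norm x0) (ltr0_norm b0) lerN2.
exists c; split.
  move: cI; rewrite in_itv /= => /andP [bc c0].
  by rewrite (ler0_norm c0) (ltr0_norm b0) lerN2.
by rewrite -opprB E sub0r mulrN opprK.
Qed.
End Ana2.

Section Ana3.
Variable R : realType.

Definition lsum n (a : 'I_n -> R) (w : 'rV[R]_n) : R := \sum_j w 0 j * a j.

Lemma lsum_lin n (a : 'I_n -> R) : linear (lsum a).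
Proof.
move=> k u v; rewrite /lsum scaler_sumr -big_split /=; apply: eq_bigr => j _.
by rewrite !mxE mulrDl -mulrA.
Qed.

Lemma lsum_cont n (a : 'I_n -> R) : continuous (lsum a).
Proof.
move=> w.
have -> : lsum a = \sum_j (fun w : 'rV[R]_n => w 0 j * a j) by rewrite fct_sumE.
apply: (big_ind (fun g : 'rV[R]_n -> R => {for w, continuous g})).
- exact: cst_continuous.
- by move=> f g cf cg; apply: continuousD.
- move=> j _; apply: continuousM; last exact: cst_continuous.
  exact: coord_continuous.
Qed.

Lemma norm_entry n (h : 'rV[R]_n) j : `|h 0 j| <= `|h|.
Proof.
rewrite [leRHS]/Num.Def.normr /= mx_normrE.
exact: (le_bigmax _ _ (0, j)).
Qed.

Lemma norm_rowle n (g : 'rV[R]_n) (c : R) : 0 <= c -> (forall j, `|g 0 j| <= c) -> `|g| <= c.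
Proof.
move=> c0 hc; rewrite [leLHS]/Num.Def.normr /= mx_normrE.
apply: bigmax_le => // -[i j] _ /=; by rewrite (ord1 i).
Qed.

Lemma C1diff n (f : 'rV[R]_n -> R) (U : set 'rV[R]_n) x :
  open U -> U x -> (forall i y, U y -> derivable f y (basis_vec R i)) ->
  (forall i, {for x, continuous ('D_(basis_vec R i) f)}) ->
  differentiable f x /\
  'd f x = lsum (fun j => 'D_(basis_vec R j) f x) :> ('rV[R]_n -> R).
Proof.
move=> oU Ux df cD.
pose a := fun j => 'D_(basis_vec R j) f x.
pose L : {linear 'rV[R]_n -> R} := HB.pack (lsum a) (GRing.isLinear.Build _ _ _ _ _ (lsum_lin a)).
have cL : continuous L by exact: (@lsum_cont n a).
suff key : f \o shift x = cst (f x) + (L : 'rV[R]_n -> R) +o_ (0 : 'rV[R]_n) id.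
  have dL := diff_unique cL key.
  split; last exact: dL.
  by apply/diff_locallyP; rewrite dL; split.
apply/eqaddoP => eps eps0.
pose e' := eps / n.+1%:R.
have e'0 : 0 < e' by rewrite divr_gt0.
have nb : \forall y \near x, U y /\ forall i, `|a i - 'D_(basis_vec R i) f y| <= e'.
  apply: filterI; first by apply: open_nbhs_nbhs; split.
  apply: (@filter_forall _ _ (fun i y => `|a i - 'D_(basis_vec R i) f y| <= e') (nbhs x) _) => i; exact: (cvgrPdist_le _ _).1 (cD i) _ e'0.
have [d d0 dball] := (nbhs_ballP _ _).1 nb.
near=> h.
have hd : `|h| < d by near: h; exact: (@nbhs0_lt R 'rV[R]_n d d0).
pose Y (j : nat) (t : R) : 'rV[R]_n :=
  x + \row_(l < n) (if (l < j)%N then h 0 l else if (l == j :> nat) then t else 0).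
have YB j t : `|t| <= `|h| -> U (Y j t) /\ forall i, `|a i - 'D_(basis_vec R i) f (Y j t)| <= e'.
  move=> th; apply: dball; rewrite -ball_normE /ball_ /= opprD addrA subrr sub0r normrN.
  apply: le_lt_trans hd; apply: norm_rowle => // l; rewrite mxE.
  case: ifP => _; first exact: norm_entry.
  by case: ifP => _ //; rewrite normr0.
have Y0 : Y 0%N 0 = x.
  rewrite /Y; have -> : \row_(l < n) (if (l < 0)%N then h 0 l else if (l == 0%N :> nat) then (0:R) else 0) = 0.
    by apply/rowP => l; rewrite !mxE; case: ifP => //; case: ifP.
  by rewrite addr0.
have Yn : Y n 0 = x + h.
  rewrite /Y; congr (_ + _); apply/rowP => l; rewrite !mxE ltn_ord //.
have YS (j : 'I_n) : Y j.+1 0 = Y j (h 0 j).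
  rewrite /Y; congr (_ + _); apply/rowP => l; rewrite !mxE ltnS leq_eqVlt.
  have [lj|lj] := eqVneq (l : nat) j.
    by have lj' : l = j := val_inj lj; rewrite /= lj' ltnn.
  by rewrite /=; case: ifP => //; case: ifP.
have Ye (j : 'I_n) t : Y j t = Y j 0 + t *: basis_vec R j.
  rewrite /Y -addrA; congr (_ + _); apply/rowP => l; rewrite !mxE /=.
  case: ifP => lj.
    by rewrite (_ : (l == j) = false) ?mulr0 ?addr0 // -val_eqE /= ltn_eqF.
  have [->|ne] := eqVneq l j; first by rewrite !eqxx mulr1 add0r.
  by rewrite val_eqE (negbTE ne) mulr0 addr0.
have step (j : 'I_n) : `|f (Y j.+1 0) - f (Y j 0) - h 0 j * a j| <= e' * `|h|.
  rewrite YS.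
  have hd0 : forall t : R, `|t| <= `|h 0 j| -> is_derive t (1:R)
      (fun s => f (Y j 0 + s *: basis_vec R j)) ('D_(basis_vec R j) f (Y j 0 + t *: basis_vec R j)).
    move=> t tb; apply: dirder; rewrite -Ye; apply: df.
    exact: (YB j t (le_trans tb (norm_entry h j))).1.
  have [c [cb E]] := @mvt_abs R _ _ (h 0 j) hd0.
  rewrite /= (Ye j (h 0 j)) in E *.
  rewrite scale0r addr0 in E; rewrite E [h 0 j * _]mulrC -mulrBl normrM.
  apply: ler_pM => //; last exact: norm_entry.
  rewrite -Ye distrC; exact: (YB j c (le_trans cb (norm_entry h j))).2.
have -> : (f \o shift x - (cst (f x) + L)) h =
    \sum_(j < n) (f (Y j.+1 0) - f (Y j 0) - h 0 j * a j).
  rewrite sumrB -(big_mkord xpredT (fun k => f (Y k.+1 0) - f (Y k 0))).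
  rewrite telescope_sumr // Yn Y0 /= [x + h]addrC opprD addrA.
  by [].
apply: (le_trans (ler_norm_sum _ _ _)).
apply: (le_trans (ler_sum _ (fun j _ => step j))).
rewrite sumr_const card_ord -mulr_natl mulrA.
apply: ler_wpM2r => //.
rewrite /e' mulrA ler_pdivrMr ?ltr0Sn // mulrC ler_pM2l // ler_nat leqnSn //.
Unshelve. all: by end_near.
Qed.


End Ana3.

Section Ana4.
Variable R : realType.
Local Notation e := (basis_vec R).

Lemma CS_gen n (W : normedModType R) (U : set 'rV[R]_n) (S : set ('rV[R]_n -> W)) :
  open U ->
  (forall g, S g -> (forall x, U x -> {for x, continuous g}) /\
     forall i, (forall x, U x -> derivable g x (e i)) /\
       exists g', S g' /\ forall y, U y -> 'D_(e i) g y = g' y) ->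
  forall f, S f -> CS U f.
Proof.
move=> oU hS f Sf.
exists (fun h => exists g, S g /\ forall y, U y -> h y = g y); split; last by exists f.
move=> h [g [Sg hg]]; have [c d] := hS _ Sg.
have nb x : U x -> {near x, g =1 h}.
  move=> Ux; apply: filterS (@open_nbhs_nbhs _ _ _ (conj oU Ux)) => y Uy; by rewrite hg.
split.
  move=> x Ux; have cf := c _ Ux; move: cf.
  rewrite /prop_for /continuous_at -(hg _ Ux) => cf.
  apply: cvg_trans (near_eq_cvg (nb _ Ux)) cf.
move=> i; have [d1 [g' [Sg' eg']]] := d i; split.
  by move=> x Ux; apply: near_eq_derivable (nb _ Ux) (d1 _ Ux).
exists g'; split => // x Ux; rewrite -eg' //.
apply: near_eq_derive; apply: filterS (@open_nbhs_nbhs _ _ _ (conj oU Ux)) => y Uy; by rewrite hg.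
Qed.

Lemma CS_diffR n (U : set 'rV[R]_n) (f : 'rV[R]_n -> R) x :
  open U -> CS U f -> U x ->
  differentiable f x /\ 'd f x = lsum (fun j => 'D_(e j) f x) :> ('rV[R]_n -> R).
Proof.
move=> oU Cf Ux; refine (C1diff oU Ux _ _).
  by move=> i y Uy; exact: (CS_der i Cf).1.
move=> i; exact: (CS_cont (CS_der i Cf).2 Ux).
Qed.

Lemma CS_entry n k (U : set 'rV[R]_n) (F : 'rV[R]_n -> 'rV[R]_k) l :
  open U -> CS U F -> CS U (fun y => F y 0 l).
Proof.
move=> oU CF.
apply: (@CS_gen n _ U (fun g : 'rV[R]_n -> R => exists G : 'rV[R]_n -> 'rV[R]_k, CS U G /\ g = fun y => G y 0 l) oU); last by exists F.
move=> g [G [CG ->]]; split.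
  move=> x Ux; apply: (@continuous_comp _ _ _ G (fun M : 'rV[R]_k => M 0 l)); first exact: CS_cont CG Ux.
  exact: coord_continuous.
move=> i; have [d1 d2] := CS_der i CG; split.
  by move=> x Ux; exact: ((derivable_mxP _ _ _).1 (d1 _ Ux) 0 l).
exists (fun y => 'D_(e i) G y 0 l); split; first by exists ('D_(e i) G).
by move=> y Uy; rewrite derive_mx ?mxE //; exact: d1.
Qed.

Lemma rsum_fun n k (G : 'rV[R]_n -> 'rV[R]_k) :
  G = \sum_(l < k) (fun y => G y 0 l *: (delta_mx 0 l : 'rV[R]_k)).
Proof. by apply: funext => y; rewrite fct_sumE -row_sum_delta. Qed.

Lemma CS_row n k (U : set 'rV[R]_n) (G : 'rV[R]_n -> 'rV[R]_k) :
  open U -> (forall l, CS U (fun y => G y 0 l)) -> CS U G.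
Proof.
move=> oU CG.
apply: (@CS_gen n _ U (fun g : 'rV[R]_n -> 'rV[R]_k => forall l, CS U (fun y => g y 0 l)) oU) => // g Cg; split.
  move=> x Ux; rewrite (rsum_fun g).
  apply: (big_ind (fun h : 'rV[R]_n -> 'rV[R]_k => {for x, continuous h})).
  - exact: cst_continuous.
  - by move=> f1 f2 c1 c2; apply: continuousD.
  - move=> l _; apply: continuousZ; last exact: cst_continuous.
    exact: CS_cont (Cg l) Ux.
have der i x : U x -> derivable g x (e i).
  move=> Ux; apply/derivable_mxP => i' l; rewrite (ord1 i').
  exact: (CS_der i (Cg l)).1.
move=> i; split; first exact: der.
exists ('D_(e i) g); split => // l.
apply: (CS_ext (f := 'D_(e i) (fun y => g y 0 l))) => //; last exact: (CS_der i (Cg l)).2.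
by move=> y Uy; rewrite derive_mx ?mxE //; exact: der.
Qed.

Lemma CS_diffV n k (U : set 'rV[R]_n) (F : 'rV[R]_n -> 'rV[R]_k) x :
  open U -> CS U F -> U x -> differentiable F x.
Proof.
move=> oU CF Ux; rewrite (rsum_fun F); apply: differentiable_sum => l.
apply: differentiableZl; exact: (CS_diffR oU (CS_entry l oU CF) Ux).1.
Qed.

Lemma chain_der n k (U : set 'rV[R]_n) (A : 'rV[R]_n -> R) (F : 'rV[R]_k -> 'rV[R]_n) y v :
  open U -> CS U A -> U (F y) -> differentiable F y ->
  derivable (A \o F) y v /\
  'D_v (A \o F) y = \sum_j ('D_v F y) 0 j * 'D_(e j) A (F y).
Proof.
move=> oU CA UF dF; have [dA dAE] := CS_diffR oU CA UF.
have dAF : differentiable (A \o F) y by apply: differentiable_comp.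
split; first exact: diff_derivable.
rewrite deriveE // diff_comp // /= dAE (deriveE _ dF) //.
Qed.
End Ana4.

Section Ana5.
Variable R : realType.
Local Notation e := (basis_vec R).

Lemma sumL_cons (T : Type) n (p : T) (l : seq T) (G : T -> 'rV[R]_n -> R) :
  (fun y => \sum_(q <- p :: l) G q y) = G p + (fun y => \sum_(q <- l) G q y).
Proof. by apply: funext => y; rewrite big_cons. Qed.

Lemma sumL_nil (T : Type) n (G : T -> 'rV[R]_n -> R) :
  (fun y => \sum_(q <- [::]) G q y) = cst 0.
Proof. by apply: funext => y; rewrite big_nil. Qed.

Lemma der_sumL (T : Type) n (l : seq T) (G : T -> 'rV[R]_n -> R) x v :
  (forall p, List.In p l -> derivable (G p) x v) ->
  derivable (fun y => \sum_(p <- l) G p y) x v /\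
  'D_v (fun y => \sum_(p <- l) G p y) x = \sum_(p <- l) 'D_v (G p) x.
Proof.
elim: l => [|p l IH] H.
  by rewrite sumL_nil big_nil; split; [exact: derivable_cst | exact: derive_cst].
have [d1 d2] := IH (fun q lq => H q (or_intror lq)).
have dp := H p (or_introl erefl).
rewrite sumL_cons big_cons; split; first exact: derivableD.
by rewrite deriveD // d2.
Qed.

Lemma cont_sumL (T : Type) n (l : seq T) (G : T -> 'rV[R]_n -> R) x :
  (forall p, List.In p l -> {for x, continuous (G p)}) ->
  {for x, continuous (fun y => \sum_(p <- l) G p y)}.
Proof.
elim: l => [|p l IH] H; first by rewrite sumL_nil; exact: cst_continuous.
rewrite sumL_cons; apply: continuousD; first by apply: H; left.
by apply: IH => q lq; apply: H; right.
Qed.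

Lemma CS_cst n (W : normedModType R) (U : set 'rV[R]_n) (c : W) : CS U (cst c).
Proof.
exists (fun g => exists c, g = cst c); split; last by exists c.
move=> g [c' ->]; split; first by move=> x _; exact: cst_continuous.
move=> i; split; first by move=> x _; exact: derivable_cst.
by exists 0; apply: funext => y; rewrite derive_cst.
Qed.

Lemma CS_sumprod n (U : set 'rV[R]_n) (l : seq (('rV[R]_n -> R) * ('rV[R]_n -> R))) :
  open U -> (forall p, List.In p l -> CS U p.1 /\ CS U p.2) ->
  CS U (fun y => \sum_(p <- l) p.1 y * p.2 y).
Proof.
move=> oU Hl.
apply: (@CS_gen R n _ U (fun g : 'rV[R]_n -> R =>
   exists l : seq (('rV[R]_n -> R) * ('rV[R]_n -> R)),
     (forall p, List.In p l -> CS U p.1 /\ CS U p.2) /\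
     g = fun y => \sum_(p <- l) p.1 y * p.2 y) oU); last by exists l.
move=> g [l0 [H0 ->]]; split.
  move=> x Ux; apply: cont_sumL => p lp; have [c1 c2] := H0 _ lp.
  by apply: continuousM; [exact: CS_cont c1 Ux | exact: CS_cont c2 Ux].
move=> i; have dp x p : U x -> List.In p l0 -> derivable (fun y => p.1 y * p.2 y) x (e i).
  move=> Ux lp; have [c1 c2] := H0 _ lp.
  by apply: derivableM; [exact: (CS_der i c1).1 | exact: (CS_der i c2).1].
split; first by move=> x Ux; exact: (@der_sumL _ n l0 (fun p y => p.1 y * p.2 y) x (e i) (fun p lp => dp x p Ux lp)).1.
suff [l' [H' E']] : exists l' : seq (('rV[R]_n -> R) * ('rV[R]_n -> R)),
    (forall p, List.In p l' -> CS U p.1 /\ CS U p.2) /\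
    forall y, U y -> \sum_(p <- l0) 'D_(e i) (fun y => p.1 y * p.2 y) y =
      \sum_(p <- l') p.1 y * p.2 y.
  exists (fun y => \sum_(p <- l') p.1 y * p.2 y); split; first by exists l'.
  by move=> y Uy; rewrite (@der_sumL _ n l0 (fun p y => p.1 y * p.2 y) y (e i) (fun p lp => dp y p Uy lp)).2 E'.
elim: l0 H0 dp => [|p l0 IH] H0 dp.
  by exists [::]; split => // y _; rewrite !big_nil.
have [l' [H' E']] := IH (fun q lq => H0 q (or_intror lq)) (fun x q Ux lq => dp x q Ux (or_intror lq)).
have [c1 c2] := H0 p (or_introl erefl).
exists [:: (p.1, 'D_(e i) p.2), ('D_(e i) p.1, p.2) & l']; split.
  move=> q [<-|[<-|lq]]; [split => //; exact: (CS_der i c2).2 | split => //; exact: (CS_der i c1).2 | exact: H'].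
move=> y Uy; rewrite big_cons E' // !big_cons /= addrA; congr (_ + _).
rewrite (deriveM ((CS_der i c1).1 _ Uy) ((CS_der i c2).1 _ Uy)) //=.
by rewrite [_ *: 'D_(e i) p.1 y]mulrC.
Qed.
End Ana5.

Section Ana6.
Variable R : realType.
Local Notation e := (basis_vec R).

Lemma CS_compR n k (U : set 'rV[R]_n) (V : set 'rV[R]_k) (A : 'rV[R]_n -> R)
    (F : 'rV[R]_k -> 'rV[R]_n) :
  open U -> open V -> CS U A -> CS V F -> (forall y, V y -> U (F y)) -> CS V (A \o F).
Proof.
move=> oU oV CA CF FU.
pose T := (('rV[R]_n -> R) * ('rV[R]_k -> R))%type.
pose ok (l : seq T) := forall p, List.In p l -> CS U p.1 /\ CS V p.2.
apply: (@CS_gen R k _ V (fun g : 'rV[R]_k -> R =>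
   exists l : seq T, ok l /\ g = fun y => \sum_(p <- l) p.2 y * p.1 (F y)) oV); last first.
  exists [:: (A, cst 1)]; split.
    by move=> p [<-|[]]; split => //; exact: CS_cst.
  by apply: funext => y; rewrite big_cons big_nil /= mul1r addr0.
have dF x : V x -> differentiable F x by move=> Vx; exact: CS_diffV oV CF Vx.
move=> g [l0 [H0 ->]]; split.
  move=> x Vx; apply: cont_sumL => p lp; have [c1 c2] := H0 _ lp.
  apply: continuousM; first exact: CS_cont c2 Vx.
  apply: (@continuous_comp _ _ _ F p.1); first exact: CS_cont CF Vx.
  exact: CS_cont c1 (FU _ Vx).
move=> i.
have dp x p : V x -> List.In p l0 -> derivable (fun y => p.2 y * p.1 (F y)) x (e i).
  move=> Vx lp; have [c1 c2] := H0 _ lp.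
  apply: derivableM; first exact: (CS_der i c2).1.
  exact: (chain_der (e i) oU c1 (FU _ Vx) (dF _ Vx)).1.
split; first by move=> x Vx; exact: (@der_sumL R _ k l0 (fun p y => p.2 y * p.1 (F y)) x (e i) (fun p lp => dp x p Vx lp)).1.
suff [l' [H' E']] : exists l' : seq T, ok l' /\
    forall y, V y -> \sum_(p <- l0) 'D_(e i) (fun y => p.2 y * p.1 (F y)) y =
      \sum_(p <- l') p.2 y * p.1 (F y).
  exists (fun y => \sum_(p <- l') p.2 y * p.1 (F y)); split; first by exists l'.
  by move=> y Vy; rewrite (@der_sumL R _ k l0 (fun p y => p.2 y * p.1 (F y)) y (e i) (fun p lp => dp y p Vy lp)).2 E'.
elim: l0 H0 dp => [|p l0 IH] H0 dp.
  by exists [::]; split; [move=> q [] | move=> y _; rewrite !big_nil].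
have [l' [H' E']] := IH (fun q lq => H0 q (or_intror lq)) (fun x q Vx lq => dp x q Vx (or_intror lq)).
have [c1 c2] := H0 p (or_introl erefl).
pose dFj (j : 'I_n) := 'D_(e i) (fun z => F z 0 j).
pose lj := [seq ('D_(e j) p.1, fun y => p.2 y * dFj j y) | j <- index_enum 'I_n].
exists ((p.1, 'D_(e i) p.2) :: lj ++ l'); split.
  move=> q /= [Eq|Hq].
    by rewrite -Eq; split; [exact: c1 | exact: (CS_der i c2).2].
  have [|lq] := List.in_app_or _ _ _ Hq; last exact: H' lq.
  move=> /List.in_map_iff [j [Eq _]]; rewrite -Eq; split; first exact: (CS_der j c1).2.
  have -> : (fun y => p.2 y * dFj j y) =
      (fun y => \sum_(q <- [:: (p.2, dFj j)]) q.1 y * q.2 y).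
    by apply: funext => y; rewrite big_cons big_nil addr0.
  apply: CS_sumprod => // q0 [<-|[]]; split => //.
  exact: (CS_der i (CS_entry j oV CF)).2.
move=> y Vy; rewrite big_cons E' // big_cons big_cat /= addrA; congr (_ + _).
have [dc1 dc1E] := chain_der (e i) oU c1 (FU _ Vy) (dF _ Vy).
have -> : (fun y => p.2 y * p.1 (F y)) = p.2 * (p.1 \o F) by [].
rewrite (deriveM ((CS_der i c2).1 _ Vy) dc1) dc1E big_map /= addrC; congr (_ + _).
  rewrite scaler_sumr; apply: eq_bigr => j _.
  rewrite /dFj derive_mx; last exact: (CS_der i CF).1.
  by rewrite mxE scalerAl.
by rewrite mulrC.
Qed.

Lemma CS_comp n k p (U : set 'rV[R]_n) (V : set 'rV[R]_k) (G : 'rV[R]_n -> 'rV[R]_p)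
    (F : 'rV[R]_k -> 'rV[R]_n) :
  open U -> open V -> CS U G -> CS V F -> (forall y, V y -> U (F y)) -> CS V (G \o F).
Proof.
move=> oU oV CG CF FU; apply: CS_row => // l.
exact: (CS_compR oU oV (CS_entry l oU CG) CF FU).
Qed.
End Ana6.

Section Iface.
Variable R : realType.
Lemma smooth_on_sub n k (U W : set 'rV[R]_n) (f : 'rV[R]_n -> 'rV[R]_k) :
  W `<=` U -> smooth_on U f -> smooth_on W f.
Proof. by move=> WU /smoothE Cf; apply/smoothE; exact: CS_sub WU Cf. Qed.
Lemma smooth_on_cont n k (U : set 'rV[R]_n) (f : 'rV[R]_n -> 'rV[R]_k) x :
  smooth_on U f -> U x -> {for x, continuous f}.
Proof. by move=> /smoothE Cf Ux; exact: CS_cont Cf Ux. Qed.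
Lemma smooth_on_ext n k (U : set 'rV[R]_n) (f g : 'rV[R]_n -> 'rV[R]_k) :
  open U -> (forall x, U x -> f x = g x) -> smooth_on U f -> smooth_on U g.
Proof. by move=> oU fg /smoothE Cf; apply/smoothE; exact: CS_ext oU fg Cf. Qed.
Lemma smooth_on_id n (U : set 'rV[R]_n) : smooth_on U id.
Proof. by apply/smoothE; exact: CS_id. Qed.
Lemma smooth_comp n k p (U : set 'rV[R]_n) (V : set 'rV[R]_k)
  (G : 'rV[R]_n -> 'rV[R]_p) (F : 'rV[R]_k -> 'rV[R]_n) :
  open U -> open V -> smooth_on U G -> smooth_on V F ->
  (forall y, V y -> U (F y)) -> smooth_on V (G \o F).
Proof.
move=> oU oV /smoothE CG /smoothE CF FU; apply/smoothE; exact: CS_comp oU oV CG CF FU.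
Qed.
End Iface.

Section Glue.
Variable R : realType.

Definition indisc (T : Type) : dspace R := @DSpace R T (fun n U p => open U).

Lemma indisc_diffeo T : is_diffeology (indisc T).
Proof.
split; first by [].
split; first by [].
split; first by [].
split; first by move=> n U p oU _.
by move=> n k U p V F _ oV.
Qed.

Lemma cell_incl_inj n (J : Type) (mj : J -> nat) : injective (@cell_incl R n J mj).
Proof.
move=> [j1 [x1 H1]] [j2 [x2 H2]] /= E.
have ej : j1 = j2 by exact: (f_equal (@projT1 _ _) E).
subst j2.
rewrite /cell_incl /= in E; have ex := @inj_pairT2 _ _ _ _ _ E; simpl in ex; subst x2.
by rewrite (Prop_irrelevance H1 H2).
Qed.

Lemma cell_inclP n (J : Type) (mj : J -> nat) z j (x : fatD R n (mj j)) :
  @cell_incl R n J mj z = existT _ j x -> fatS_set R n (mj j) x.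
Proof.
case: z => [j1 [x1 H1]] /= E.
have ej : j1 = j by exact: (f_equal (@projT1 _ _) E).
subst j.
rewrite /cell_incl /= in E; have ex := @inj_pairT2 _ _ _ _ _ E; simpl in ex; subst x.
exact: H1.
Qed.

Lemma coprod_compat c (J : Type) (mj : J -> nat) a k (U : set 'rV[R]_a) (V : set 'rV[R]_k)
  (d : 'rV[R]_a -> coprod (fun j : J => fatD R c (mj j))) F :
  dplot U d -> open V -> smooth_on V F -> (forall y, V y -> U (F y)) ->
  dplot V (d \o F).
Proof.
move=> [oU dl] oV sF FVU; split=> // x Vx.
have [W [j [q [oW Wx WU qW dq]]]] := dl _ (FVU _ Vx).
exists (V `&` F @^-1` W), j, (q \o F); split.
- apply: open_preim => //; move=> y Vy; exact: smooth_on_cont sF Vy.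
- by split.
- by move=> y [].
- case: qW => _ sq.
  have oV' : open (V `&` F @^-1` W).
    apply: open_preim => //; move=> y Vy; exact: smooth_on_cont sF Vy.
  split => //.
  have -> : (sval \o (q \o F)) = (sval \o q) \o F by [].
  apply: (smooth_comp oW oV' sq).
  + apply: smooth_on_sub sF; by move=> y [].
  + by move=> y [].
- by move=> y [_ Wy] /=; rewrite dq.
Qed.

Lemma coprod_lift c (J : Type) (mj : J -> nat) a (V : set 'rV[R]_a)
  (e : 'rV[R]_a -> coprod (fun j : J => fatD R c (mj j))) :
  dplot V e -> (forall y, V y -> exists s, @cell_incl R c J mj s = e y) ->
  (exists y, V y) ->
  exists sg : 'rV[R]_a -> coprod (fun j : J => fatS R c (mj j)),
    dplot V sg /\ forall y, V y -> @cell_incl R c J mj (sg y) = e y.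
Proof.
move=> [oV el] ex [y0 Vy0].
have [s0 _] := ex _ Vy0.
pose sg y := match pselect (exists s, @cell_incl R c J mj s = e y) with
  | left H => proj1_sig (cid H) | right _ => s0 end.
have sgE y : V y -> cell_incl R c J mj (sg y) = e y.
  move=> Vy; rewrite /sg; case: pselect => [H|H]; last by exfalso; apply: H; exact: ex.
  exact: (proj2_sig (cid H)).
exists sg; split => //; split => // x Vx.
have [W [j [r [oW Wx WV [_ sr] er]]]] := el _ Vx.
have Sr y : W y -> fatS_set R c (mj j) (r y).
  move=> Wy; apply: (@cell_inclP c J mj (sg y)); rewrite sgE ?er //; exact: WV.
pose qS y : fatS R c (mj j) := match pselect (fatS_set R c (mj j) (r y)) with
  | left H => exist _ (r y) H | right _ => exist _ (r x) (Sr x Wx) end.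
have qSE y : W y -> sval (qS y) = r y.
  by move=> Wy; rewrite /qS; case: pselect => // H; exfalso; apply: H; exact: (Sr y Wy).
exists W, j, qS; split => //.
  split => //; apply: smooth_on_ext sr => // y Wy /=; by rewrite qSE.
move=> y Wy; apply: (@cell_incl_inj c J mj).
rewrite sgE ?er /=; [by rewrite /cell_incl /= qSE | by [] | exact: WV].
Qed.
End Glue.

Theorem proposition5p2 (R : realType)
    (X : dspace R) (Xs : nat -> dspace R)
    (J : nat -> Type) (mm : forall n, J n -> nat)
    (h : forall n, coprod (fun j : J n => fatS R n (mm n j)) -> Xs n)
    (ih : forall n, Xs n -> Xs n.+1)
    (hh : forall n, coprod (fun j : J n => fatD R n (mm n j)) -> Xs n.+1)
    (c : forall n, Xs n -> X) :
  is_diffeology X -> (forall k, is_diffeology (Xs k)) ->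
  (forall n, dsmooth (h n)) ->
  (forall n, is_pushout (h n) (@cell_incl R n (J n) (mm n)) (ih n) (hh n)) ->
  is_seq_colimit ih c ->
  forall n : nat, induction_map (ih n).
Proof.
move=> _ dXs sh PO _ n.
have [sih shh comm univ] := PO n.
have [dAo [dAe [dAc [dAl dAs]]]] := dXs n.
have [dPo [dPe [dPc [dPl dPs]]]] := dXs n.+1.
pose kB (x : Xs n) : indisc R (set (Xs n)) := [set x].
pose kC (d : coprod (fun j : J n => fatD R n (mm n j))) : indisc R (set (Xs n)) :=
  [set y | exists s, cell_incl R n (J n) (mm n) s = d /\ h n s = y].
have sB : dsmooth kB by move=> a U p pl; exact: dAo pl.
have sC : dsmooth kC by move=> a U p [oU _].
have cBC : kB \o h n = kC \o cell_incl R n (J n) (mm n).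
  apply: funext => s; apply/seteqP; split => y /=.
    by move=> ->; exists s.
  by move=> [s' [/cell_incl_inj -> <-]].
have [u1 [[_ [u1B u1C]] _]] := univ _ (@indisc_diffeo R _) _ _ sB sC cBC.
have ihinj : injective (ih n).
  move=> x y E.
  have : kB x = kB y by rewrite -u1B /= E.
  by move=> E2; have : kB y x by rewrite -E2.
have lift0 e x : hh n e = ih n x ->
    exists s, cell_incl R n (J n) (mm n) s = e /\ h n s = x.
  move=> E.
  have e1 := congr1 (fun f => f e) u1C; have e2 := congr1 (fun f => f x) u1B.
  simpl in e1, e2; rewrite E e2 in e1.
  have : kC e x by rewrite -e1.
  by [].
have glue k (V : set 'rV[R]_k) (phi : 'rV[R]_k -> Xs n.+1) :
    open V -> (forall y, V y -> exists x, ih n x = phi y) ->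
    (forall y, V y -> exists W, [/\ open W, W y, W `<=` V &
        exists q, dplot W q /\ forall z, W z -> ih n (q z) = phi z]) ->
    (exists y, V y) ->
    exists q, dplot V q /\ forall y, V y -> ih n (q y) = phi y.
  move=> oV ex loc [y0 Vy0]; have [x0 _] := ex _ Vy0.
  pose q y := match pselect (exists x, ih n x = phi y) with
    | left H => proj1_sig (cid H) | right _ => x0 end.
  have qE y : V y -> ih n (q y) = phi y.
    move=> Vy; rewrite /q; case: pselect => [H|H]; last by exfalso; apply: H; exact: ex.
    exact: (proj2_sig (cid H)).
  exists q; split => //; apply: dAl => // y Vy.
  have [W [oW Wy WV [qW [pW eW]]]] := loc _ Vy.
  exists W; split => //; apply: dAe pW _ => z Wz; apply: ihinj.
  by rewrite eW // qE //; exact: WV.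
pose Qp := fun k (U : set 'rV[R]_k) (p : 'rV[R]_k -> Xs n.+1) => (dplot U p /\
  forall k2 (V : set 'rV[R]_k2) (F : 'rV[R]_k2 -> 'rV[R]_k), open V -> smooth_on V F ->
    (forall y, V y -> U (F y)) -> (forall y, V y -> exists x, ih n x = p (F y)) ->
    (exists y, V y) -> exists q, dplot V q /\ forall y, V y -> ih n (q y) = p (F y)).
pose Q := @DSpace R (Xs n.+1) Qp.
have dQ : is_diffeology Q.
  split; first by move=> k U p [/dPo].
  split.
    move=> k U p p' [pp cp] epp; split; first exact: dPe pp epp.
    move=> k' V F oV sF FU ex ne.
    have ex' y : V y -> exists x, ih n x = p (F y) by move=> Vy; rewrite epp; [exact: ex | exact: FU].
    have [q [pq eq]] := cp _ _ _ oV sF FU ex' ne.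
    by exists q; split => // y Vy; rewrite eq // epp //; exact: FU.
  split.
    move=> k U c0 oU; split; first exact: dPc.
    move=> k' V F oV sF FU ex [y0 Vy0]; have [x0 e0] := ex _ Vy0.
    by exists (fun _ => x0); split => //; exact: dAc.
  split.
    move=> k U p oU loc; split.
      apply: dPl => // x Ux; have [W [oW Wx WU [pW _]]] := loc _ Ux.
      by exists W.
    move=> k' V F oV sF FU ex ne; apply: glue => // y Vy.
    have [W [oW WFy WU [_ cW]]] := loc _ (FU _ Vy).
    have oV' : open (V `&` F @^-1` W).
      apply: open_preim => //; move=> z Vz; exact: smooth_on_cont sF Vz.
    have [q [pq eq]] := cW _ (V `&` F @^-1` W) F oV' (smooth_on_sub (fun z => @proj1 _ _) sF)
      (fun z => @proj2 _ _) (fun z Vz => ex z (proj1 Vz)) (ex_intro _ y (conj Vy WFy)).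
    by exists (V `&` F @^-1` W); split; [exact: oV' | by split | by move=> z [] | exists q].
  move=> k k' U p V G [pp cp] oV sG GU; split; first exact: (dPs _ _ _ _ _ _ pp oV sG GU).
  move=> k2 T F oT sF FV ex ne.
  have [q [pq eq]] := cp _ T (G \o F) oT (smooth_comp oV oT sG sF FV)
    (fun y Ty => GU _ (FV _ Ty)) ex ne.
  by exists q.
have sBQ : dsmooth (ih n : Xs n -> Q).
  move=> k U p pp; split; first exact: sih.
  move=> k2 V F oV sF FU ex ne; exists (p \o F); split => //.
  exact: (dAs _ _ _ _ _ _ pp oV sF FU).
have sCQ : dsmooth (hh n : _ -> Q).
  move=> k U d pd; split; first exact: shh.
  move=> k2 V F oV sF FU ex ne.
  have pe := coprod_compat pd oV sF FU.
  have ex2 y : V y -> exists s, cell_incl R n (J n) (mm n) s = (d \o F) y.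
    move=> Vy; have [x ex'] := ex _ Vy.
    by have [s [es _]] := lift0 _ _ (esym ex'); exists s.
  have [sg [psg esg]] := coprod_lift pe ex2 ne.
  exists (h n \o sg); split; first exact: sh.
  move=> y Vy /=; have := congr1 (fun f => f (sg y)) comm; rewrite /= => ->.
  by rewrite esg.
have [u [[su [uB uC]] _]] := univ Q dQ _ _ sBQ sCQ comm.
have suP : dsmooth (u : Xs n.+1 -> Xs n.+1).
  by move=> k U p pp; have [] := su _ _ _ pp.
have [u0 [_ uniq]] := univ _ (dXs n.+1) _ _ sih shh comm.
have uid : u = id.
  rewrite (uniq _ suP uB uC); symmetry; apply: uniq => //.
have allQ k (U : set 'rV[R]_k) p : dplot U p -> Qp k U p.
  by move=> pp; have := su _ _ _ pp; rewrite uid.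
split => //.
split.
  by move=> k U p pp; exact: sih.
pose g' (z : Defs.subspace (dimage (ih n))) : Xs n := proj1_sig (cid (proj2_sig z)).
have g'E z : ih n (g' z) = sval z by exact: (proj2_sig (cid (proj2_sig z))).
exists g'; split.
- move=> k U p pp.
  have [_ cp] := allQ _ _ _ pp.
  have oU : open U := dPo _ _ _ pp.
  have [[y0 Uy0]|ne] := pselect (exists y, U y).
    have [q [pq eq]] := cp _ U id oU (smooth_on_id U) (fun y Uy => Uy)
      (fun y _ => proj2_sig (p y)) (ex_intro _ y0 Uy0).
    apply: dAe pq _ => y Uy; apply: ihinj; by rewrite eq // g'E.
  apply: dAe (dAc _ _ (g' (p 0)) oU) _ => y Uy; exfalso; apply: ne; by exists y.
- by move=> x; apply: ihinj; rewrite g'E.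
- case=> y Hy; apply: eq_exist; exact: g'E.
Qed.
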